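(* Let $G$ be a matrix with entries from a field $\mathbb{F}$, with row index set $S$ and column index set $T$. Suppose $S=S_1\cup\cdots\cup S_m$ and $T=T_1\cup\cdots\cup T_n$ are partitions into pairwise disjoint sets. Let $s_1,\dots,s_m,t_1,\dots,t_n$ be non-negative integers with $t_j\le |T_j|$ for all $j$. Then there exist subsets $\mathbf{s}_i\subseteq S_i$ with $|\mathbf{s}_i|=s_i$ ($1\le i\le m$) and $\mathbf{t}_j\subseteq T_j$ with $|\mathbf{t}_j|=t_j$ ($1\le j\le n$) such that \[ \operatorname{rank}\Big(G\big(\textstyle\bigcup_{i=1}^m\mathbf{s}_i,\bigcup_{j=1}^n\mathbf{t}_j\big)\Big)=\sum_{i=1}^m s_i, \] if and only if for every $I\subseteq\{1,\dots,m\}$ and every $K\subseteq\{1,\dots,n\}$, \[ \operatorname{rank}\Big(G\big(\textstyle\bigcup_{i\in I}S_i,\bigcup_{k\in K}T_k\big)\Big)\ \ge\ \sum_{i\in I}s_i+\sum_{k\in K}t_k-\sum_{j=1}^n t_j . \]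
   Context: For $\mathbf{s}\subseteq S$ and $\mathbf{t}\subseteq T$, $G(\mathbf{s},\mathbf{t})$ denotes the submatrix of $G$ formed by the rows with indices in $\mathbf{s}$ and the columns with indices in $\mathbf{t}$ (the rank of a submatrix with no rows or no columns is $0$). *)

(* Defs.v *)
From HB Require Import structures.
From mathcomp Require Import all_boot all_order all_algebra.
Set Implicit Arguments. Unset Strict Implicit. Unset Printing Implicit Defensive.
Import Order.TTheory GRing.Theory Num.Theory.

Definition submatrix (F : fieldType) (p q : nat) (G : 'M[F]_(p, q))
  (s : {set 'I_p}) (t : {set 'I_q}) : 'M[F]_(#|s|, #|t|) :=
  mxsub (fun i : 'I_#|s| => enum_val i) (fun j : 'I_#|t| => enum_val j) G.

(* Main.v *)
From HB Require Import structures.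
From mathcomp Require Import all_boot all_order all_algebra.
Set Implicit Arguments. Unset Strict Implicit. Unset Printing Implicit Defensive.
From Stdlib Require Import Lia.
Require Import Defs.
Import Order.TTheory GRing.Theory Num.Theory.

Section Rado.
Variables (E : finType) (r : {set E} -> nat).
Hypothesis rmono : forall A B : {set E}, A \subset B -> r A <= r B.
Hypothesis rsub : forall A B : {set E}, r (A :|: B) + r (A :&: B) <= r A + r B.
Hypothesis rcard : forall A, r A <= #|A|.

Lemma rado_base (I : finType) (A : I -> {set E}) : (forall i, #|A i| <= 1) ->
  (forall J : {set I}, #|J| <= r (\bigcup_(j in J) A j)) ->
  exists f : I -> E, (forall i, f i \in A i) /\ #|I| <= r [set f i | i in [set: I]].
Proof.
move=> h1 hJ.
have : forall i, exists x, x \in A i.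
  move=> i; have := hJ [set i]; rewrite cards1 big_set1 => h.
  have /card_gt0P [x hx] : 0 < #|A i| by apply: leq_trans h (rcard _).
  by exists x.
case/fin_all_exists => f hf; exists f; split => //.
have := hJ [set: I]; rewrite cardsT => h; apply: leq_trans h (rmono _).
apply/bigcupsP => i _; apply/subsetP => x hx.
case: (eqVneq x (f i)) => [->|hne]; first by apply: imset_f; rewrite inE.
have : 1 < #|A i| by apply/card_gt1P; exists x, (f i); split.
by rewrite ltnNge h1.
Qed.

Lemma rado_n (I : finType) n : forall (A : I -> {set E}), \sum_i #|A i| <= n ->
  (forall J : {set I}, #|J| <= r (\bigcup_(j in J) A j)) ->
  exists f : I -> E, (forall i, f i \in A i) /\ #|I| <= r [set f i | i in [set: I]].
Proof.
elim: n => [|n IH] A hs hJ.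
  apply: rado_base hJ => i; move: hs; rewrite (bigD1 i) //=.
  by move/(leq_trans (leq_addr _ _)) => /leq_trans; apply.
case: (boolP [forall i, #|A i| <= 1]) => [/forallP h1|].
  exact: rado_base hJ.
rewrite negb_forall => /existsP [i0]; rewrite -ltnNge => /card_gt1P [x [y [hx hy hxy]]].
pose Ad z := fun i => if i == i0 then A i0 :\ z else A i.
have AdS : forall z i, Ad z i \subset A i.
  by move=> z i; rewrite /Ad; case: eqP => [->|_]; rewrite ?subsetDl.
have hsum : forall z, z \in A i0 -> \sum_i #|Ad z i| <= n.
  move=> z hz; rewrite -ltnS; apply: leq_trans hs.
  rewrite [X in _ < X](bigD1 i0) //= (bigD1 i0) //= {1}/Ad eqxx.
  rewrite (eq_bigr (fun i => #|A i|)); last by move=> i /negbTE hi; rewrite /Ad hi.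
  by rewrite [X in _ < X + _](cardsD1 z) hz ltn_add2r.
have hgood : forall z, z \in A i0 ->
    [forall J : {set I}, #|J| <= r (\bigcup_(j in J) Ad z j)] ->
    exists f : I -> E, (forall i, f i \in A i) /\ #|I| <= r [set f i | i in [set: I]].
  move=> z hz /forallP hJz; have [f [hf1 hf2]] := IH _ (hsum z hz) hJz.
  by exists f; split => // i; apply: (subsetP (AdS z i)).
case: (boolP [forall J : {set I}, #|J| <= r (\bigcup_(j in J) Ad x j)]);
  first exact: (hgood x hx).
case: (boolP [forall J : {set I}, #|J| <= r (\bigcup_(j in J) Ad y j)]);
  first by move=> h _; exact: (hgood y hy h).
rewrite !negb_forall => /existsP [J2 hJ2] /existsP [J1 hJ1].
move: hJ1 hJ2; rewrite -!ltnNge => hJ1 hJ2.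
have hin : forall z (J : {set I}), r (\bigcup_(j in J) Ad z j) < #|J| -> i0 \in J.
  move=> z J hlt; case: (boolP (i0 \in J)) => // hn; exfalso.
  have : \bigcup_(j in J) Ad z j = \bigcup_(j in J) A j.
    apply: eq_bigr => j hj; rewrite /Ad; case: eqP => // ej.
    by move: hj; rewrite ej (negbTE hn).
  by move=> e; move: hlt; rewrite e ltnNge hJ.
have i1 := hin _ _ hJ1; have i2 := hin _ _ hJ2.
set P := \bigcup_(j in J1) Ad x j; set Q := \bigcup_(j in J2) Ad y j.
have hU : \bigcup_(j in J1 :|: J2) A j \subset P :|: Q.
  apply/bigcupsP => j; rewrite inE => hj; apply/subsetP => z hz.
  rewrite inE; case: (eqVneq j i0) => [ej|nj].
    subst j; case: (eqVneq z x) => [ezx|nzx].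
      apply/orP; right; apply/bigcupP; exists i0 => //.
      rewrite /Ad eqxx !inE hz andbT; subst z; exact: hxy.
    apply/orP; left; apply/bigcupP; exists i0 => //.
    by rewrite /Ad eqxx !inE nzx.
  case/orP: hj => hj; [apply/orP; left|apply/orP; right]; apply/bigcupP;
    exists j => //; by rewrite /Ad (negbTE nj).
have hI : \bigcup_(j in (J1 :&: J2) :\ i0) A j \subset P :&: Q.
  apply/bigcupsP => j; rewrite !inE => /andP [nj /andP [j1 j2]].
  apply/subsetP => z hz; rewrite inE; apply/andP; split; apply/bigcupP;
    exists j => //; by rewrite /Ad (negbTE nj).
have hc := cardsUI J1 J2.
have hc2 := cardsD1 i0 (J1 :&: J2); rewrite inE i1 i2 /= in hc2.
have := rsub P Q.
have := leq_trans (hJ _) (rmono hU).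
have := leq_trans (hJ _) (rmono hI).
move: hJ1 hJ2; rewrite -/P -/Q => hJ1 hJ2.
move: hJ1 hJ2 hc hc2; move: (#|J1 :|: J2|) (#|J1 :&: J2|) (#|J1|) (#|J2|) (r P) (r Q)
  (r (P :|: Q)) (r (P :&: Q)) (#|(J1 :&: J2) :\ i0|) => a b c d e f g h k.
move=> /ssrnat.ltP h1 /ssrnat.ltP h2 e1 e2 /ssrnat.leP h3 /ssrnat.leP h4 /ssrnat.leP h5; exfalso.
move: e1 e2 h3 h4 h5 h1 h2; rewrite -!plusE; lia.
Qed.

Lemma rado (I : finType) (A : I -> {set E}) :
  (forall J : {set I}, #|J| <= r (\bigcup_(j in J) A j)) ->
  exists f : I -> E, (forall i, f i \in A i) /\ #|I| <= r [set f i | i in [set: I]].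
Proof. exact: (@rado_n I _ A (leqnn _)). Qed.
End Rado.
Local Open Scope ring_scope.
Section Mx.
Variables (F : fieldType) (p q : nat) (G : 'M[F]_(p, q)).

Definition wv (x : 'I_p + 'I_q) : 'rV[F]_q :=
  match x with inl i => row i G | inr j => delta_mx 0 j end.
Definition WS (X : {set 'I_p + 'I_q}) := (\sum_(x in X) <<wv x>>)%MS.
Definition rk (X : {set 'I_p + 'I_q}) : nat := \rank (WS X).

Lemma WS_sup (X : {set _}) x : x \in X -> (wv x <= WS X)%MS.
Proof. by move=> hx; apply: (sumsmx_sup x) => //; rewrite genmxE. Qed.

Lemma WS_mono (X Y : {set 'I_p + 'I_q}) : X \subset Y -> (WS X <= WS Y)%MS.
Proof.
move=> hXY; apply/sumsmx_subP => x hx; rewrite genmxE; apply: WS_sup.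
exact: (subsetP hXY).
Qed.

Lemma rk_mono (X Y : {set 'I_p + 'I_q}) : X \subset Y -> (rk X <= rk Y)%N.
Proof. by move=> h; apply: mxrankS; apply: WS_mono. Qed.

Lemma rk_sub (X Y : {set 'I_p + 'I_q}) : (rk (X :|: Y) + rk (X :&: Y) <= rk X + rk Y)%N.
Proof.
rewrite -[(rk X + rk Y)%N]mxrank_sum_cap /rk leq_add //; apply: mxrankS.
  rewrite [in X in (X <= _)%MS]/WS; apply/sumsmx_subP => x; rewrite inE => /orP [] hx; rewrite genmxE.
    by apply: submx_trans (addsmxSl _ _); apply: WS_sup.
  by apply: submx_trans (addsmxSr _ _); apply: WS_sup.
rewrite sub_capmx; apply/andP; split; apply: WS_mono;
  by rewrite ?subsetIl ?subsetIr.
Qed.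

Lemma rk_card (X : {set 'I_p + 'I_q}) : (rk X <= #|X|)%N.
Proof.
rewrite /rk /WS -sum1_card.
elim/big_rec2: _ => [|x a A _ h]; first by rewrite mxrank0.
apply: leq_trans (mxrank_adds_leqif _ _) _.
apply: leq_add h; rewrite genmxE; exact: rank_leq_row.
Qed.


Lemma memXl (R : {set 'I_p}) (D : {set 'I_q}) i :
  (inl i \in inl @: R :|: inr @: D) = (i \in R).
Proof.
rewrite inE (mem_imset _ _ (@inl_inj _ _)); case: (i \in R) => //=.
by apply/negP => /imsetP [j _].
Qed.

Lemma memXr (R : {set 'I_p}) (D : {set 'I_q}) j :
  (inr j \in inl @: R :|: inr @: D) = (j \in D).
Proof.
rewrite inE (mem_imset _ _ (@inr_inj _ _)); case: (j \in D) => //=; rewrite ?orbF ?orbT // .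
by apply/negP => /imsetP [i _].
Qed.

Lemma rk_key (R : {set 'I_p}) (D : {set 'I_q}) :
  rk (inl @: R :|: inr @: D) = (#|D| + \rank (submatrix G R (~: D)))%N.
Proof.
set X := inl @: R :|: inr @: D; set C := ~: D.
pose g := (fun k : 'I_#|C| => enum_val k).
pose f := (fun k : 'I_#|R| => enum_val k).
pose P' := colsub g (1%:M : 'M[F]_q).
have hP : forall m (A : 'M[F]_(m, q)), A *m P' = colsub g A.
  by move=> m A; rewrite mulmx_colsub mulmx1.
pose V := rowsub f G.
have hsubm : submatrix G R C = V *m P'.
  by rewrite hP /submatrix mxsubcr.
have hgC : forall k, g k \in C by move=> k; apply: enum_valP.
have hVW : (V <= WS X)%MS.
  apply/row_subP => k; rewrite row_rowsub.
  have -> : row (f k) G = wv (inl (f k)) by [].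
  by apply: WS_sup; rewrite memXl; apply: enum_valP.
have hWV : (WS X <= V + kermx P')%MS.
  rewrite /WS; apply/sumsmx_subP => x hx; rewrite genmxE.
  case: x hx => [i|j]; rewrite ?memXl ?memXr => hx /=.
    apply: submx_trans (addsmxSl _ _).
    rewrite -(enum_rankK_in hx hx) -(row_rowsub f G).
    exact: row_sub.
  apply: submx_trans (addsmxSr _ _).
  rewrite sub_kermx hP; apply/eqP/matrixP => a b; rewrite !mxE.
  have := hgC b; rewrite inE => hb.
  have hne : g b != j by apply: contraNneq hb => ->.
  by rewrite (negbTE hne) andbF.
have hker : (kermx P' <= WS X)%MS.
  apply/row_subP => a; set u := row a (kermx P').
  have hu : u *m P' = 0 by rewrite /u -row_mul mulmx_ker row0.
  rewrite (row_sum_delta u); apply: summx_sub => c _.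
  case: (boolP (c \in D)) => hc.
    apply: scalemx_sub; have -> : delta_mx 0 c = wv (inr c) by [].
    by apply: WS_sup; rewrite memXr.
  have hcC : c \in C by rewrite inE.
  have : (u *m P') 0 (enum_rank_in hcC c) = 0 by rewrite hu mxE.
  rewrite hP mxE /g enum_rankK_in // => ->.
  by rewrite scale0r sub0mx.
have hPP : P'^T *m P' = 1%:M.
  rewrite /P' trmx_mxsub trmx1 -mxsub_mul mulmx1.
  apply/matrixP => a b; rewrite !mxE /g (inj_eq enum_val_inj). by [].
have hrP : \rank P' = #|C|.
  apply/eqP; rewrite eqn_leq rank_leq_col /=.
  by rewrite -{1}(mxrank1 F #|C|) -hPP mxrankM_maxr.
have hrW : \rank (WS X *m P') = \rank (V *m P').
  apply/eqP; rewrite eqn_leq; apply/andP; split; apply: mxrankS; last exact: submxMr.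
  apply: submx_trans (submxMr P' hWV) _.
  by rewrite addsmxMr addsmx_sub submx_refl mulmx_ker sub0mx.
rewrite /rk -(mxrank_mul_ker (WS X) P') (capmx_idPr hker) mxrank_ker hrP.
rewrite hrW -hsubm addnC; congr (_ + _)%N.
have h : (#|D| + #|C| = q)%N by rewrite cardsC card_ord.
by rewrite -[X in (X - _)%N]h addnK.
Qed.

End Mx.
Local Close Scope ring_scope.
Lemma card_bigcup_le (I T : finType) (P : pred I) (S : I -> {set T}) :
  #|\bigcup_(i | P i) S i| <= \sum_(i | P i) #|S i|.
Proof.
elim/big_rec2: _ => [|i a A _ h]; first by rewrite cards0.
by apply: leq_trans (leq_card_setU _ _) _; rewrite leq_add2l.
Qed.

Lemma card_bigcup_eq (I T : finType) (S : I -> {set T}) :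
  (forall i j, i != j -> [disjoint S i & S j]) ->
  forall P : {set I}, #|\bigcup_(i in P) S i| = \sum_(i in P) #|S i|.
Proof.
move=> hd P; move: {2}#|P| (leqnn #|P|) => n; elim: n P => [|n IH] P hP.
  move: hP; rewrite leqn0 cards_eq0 => /eqP ->.
  by rewrite !big_set0 cards0.
case: (set_0Vmem P) => [->|[i0 hi0]]; first by rewrite !big_set0 cards0.
rewrite (big_setD1 i0 hi0) (big_setD1 i0 hi0) /= cardsU.
have -> : S i0 :&: \bigcup_(i in P :\ i0) S i = set0.
  apply/disjoint_setI0; apply: bigcup_disjoint => i; rewrite !inE => /andP [hi _].
  by apply: hd; rewrite eq_sym.
rewrite cards0 subn0 IH //.
by move: hP; rewrite (cardsD1 i0 P) hi0.
Qed.

Lemma card_mk (A B : finType) (X : {set A}) (Y : {set B}) :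
  #|inl @: X :|: inr @: Y| = #|X| + #|Y|.
Proof.
rewrite cardsU !card_imset; try by [apply: inl_inj|apply: inr_inj].
have -> : [set inl x | x in X] :&: [set inr x | x in Y] = set0.
  apply/setP => z; rewrite !inE; apply/negP => /andP [/imsetP [x _ ->] /imsetP [y _]].
  by [].
by rewrite cards0 subn0.
Qed.

Lemma card_sig (K : finType) (s : K -> nat) (I : {set K}) :
  #|[set x : {i : K & 'I_(s i)} | tag x \in I]| = \sum_(i in I) s i.
Proof.
rewrite -sum1_card.
rewrite (eq_bigr (fun i => \sum_(k : 'I_(s i)) 1)); last first.
  by move=> i _; rewrite sum1_card card_ord.
rewrite (sig_big_dep (fun i => i \in I) (fun i k => true) (fun i k => 1%N)) /=.
by apply: eq_bigl => x; rewrite inE andbT.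
Qed.

Lemma preim_inl (A B : finType) (Z : {set A + B}) (W : {set A}) :
  Z \subset inl @: W -> Z = inl @: [set c | inl c \in Z].
Proof.
move=> hZ; apply/setP => z; apply/idP/idP.
  move=> hz; have /imsetP [c _ e] := subsetP hZ z hz.
  by apply/imsetP; exists c; rewrite // inE -e.
by case/imsetP => c; rewrite inE => h ->.
Qed.

Lemma preim_inr (A B : finType) (Z : {set A + B}) (W : {set B}) :
  Z \subset inr @: W -> Z = inr @: [set c | inr c \in Z].
Proof.
move=> hZ; apply/setP => z; apply/idP/idP.
  move=> hz; have /imsetP [c _ e] := subsetP hZ z hz.
  by apply/imsetP; exists c; rewrite // inE -e.
by case/imsetP => c; rewrite inE => h ->.
Qed.
Section Part.
Variables (n q : nat) (T : 'I_n -> {set 'I_q}).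
Hypothesis hTdisj : forall j k : 'I_n, j != k -> [disjoint T j & T k].
Hypothesis hTcov : \bigcup_(j < n) T j = [set: 'I_q].

Lemma block_uniq c j k : c \in T j -> c \in T k -> j = k.
Proof.
move=> hj hk; case: (eqVneq j k) => // hne; exfalso.
have := hTdisj hne => /disjoint_setI0 /setP /(_ c); by rewrite !inE hj hk.
Qed.

Lemma block_ex c : exists j, c \in T j.
Proof.
have : c \in \bigcup_(j < n) T j by rewrite hTcov inE.
by case/bigcupP => j _ h; exists j.
Qed.

Lemma compl_bigcup (L : {set 'I_n}) :
  ~: (\bigcup_(j in L) T j) = \bigcup_(j in ~: L) T j.
Proof.
apply/setP => c; rewrite inE; have [j0 hj0] := block_ex c.
apply/idP/idP.
  move=> hn; apply/bigcupP; exists j0 => //; rewrite inE.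
  by apply: contra hn => hL; apply/bigcupP; exists j0.
case/bigcupP => j; rewrite inE => hjL hj; apply/negP; case/bigcupP => k hk hck.
by move: hjL; rewrite (block_uniq hj hck) hk.
Qed.

Lemma compl_sub (V : 'I_n -> {set 'I_q}) : (forall j, V j \subset T j) ->
  ~: (\bigcup_j V j) = \bigcup_j (T j :\: V j).
Proof.
move=> hV; apply/setP => c; rewrite inE; have [j0 hj0] := block_ex c.
apply/idP/idP.
  move=> hn; apply/bigcupP; exists j0 => //; rewrite !inE hj0 andbT.
  by apply: contra hn => hL; apply/bigcupP; exists j0.
case/bigcupP => j _; rewrite inE => /andP [hnj hj]; apply/negP.
case/bigcupP => k _ hck.
have e := block_uniq hj (subsetP (hV k) _ hck).
by move: hnj; rewrite e hck.
Qed.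
End Part.

Unset Implicit Arguments.
Theorem mainTheorem2 (F : fieldType) (p q m n : nat) (G : 'M[F]_(p, q))
  (S : 'I_m -> {set 'I_p}) (T : 'I_n -> {set 'I_q})
  (hSdisj : forall i j : 'I_m, i != j -> [disjoint S i & S j])
  (hScov : \bigcup_(i < m) S i = [set: 'I_p])
  (hTdisj : forall j k : 'I_n, j != k -> [disjoint T j & T k])
  (hTcov : \bigcup_(j < n) T j = [set: 'I_q])
  (s : 'I_m -> nat) (t : 'I_n -> nat)
  (ht : forall j : 'I_n, t j <= #|T j|) :
  (exists (ss : 'I_m -> {set 'I_p}) (tt : 'I_n -> {set 'I_q}),
      (forall i, ss i \subset S i /\ #|ss i| = s i) /\
      (forall j, tt j \subset T j /\ #|tt j| = t j) /\
      \rank (submatrix G (\bigcup_(i < m) ss i) (\bigcup_(j < n) tt j))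
        = \sum_(i < m) s i)
  <->
  (forall (I : {set 'I_m}) (K : {set 'I_n}),
      ((\sum_(i in I) s i + \sum_(k in K) t k)%:Z - (\sum_(j < n) t j)%:Z
        <= (\rank (submatrix G (\bigcup_(i in I) S i) (\bigcup_(k in K) T k)))%:Z)%R).
Proof.
have hsplit : forall K : {set 'I_n},
    (\sum_(j < n) t j = \sum_(k in K) t k + \sum_(j in ~: K) t j)%N.
  move=> K; rewrite (bigID (fun j => j \in K)) /=; congr (_ + _)%N.
  by apply: eq_bigl => j; rewrite inE.
have hsplitT : forall L : {set 'I_n},
    (\sum_(j in L) (#|T j| - t j) + \sum_(j in L) t j = \sum_(j in L) #|T j|)%N.
  move=> L; rewrite -big_split /=; apply: eq_bigr => j _; exact: subnK.
split.
- case=> ss [tt [hss [htt hrank]]] I K.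
  set R := \bigcup_(i < m) ss i; set Cc := \bigcup_(j < n) tt j.
  set L := ~: K.
  have hssd : forall i j, i != j -> [disjoint ss i & ss j].
    by move=> i j h; apply: disjointW (hss i).1 (hss j).1 (hSdisj _ _ h).
  have httS : forall j, tt j \subset T j by move=> j; exact: (htt j).1.
  have hTtd : forall i j, i != j -> [disjoint T i :\: tt i & T j :\: tt j].
    by move=> i j h; apply: disjointW (subsetDl _ _) (subsetDl _ _) (hTdisj _ _ h).
  have hD0 : ~: Cc = \bigcup_j (T j :\: tt j) := compl_sub hTdisj hTcov httS.
  set Y := inl @: (\bigcup_(i in I) ss i) :|: inr @: (\bigcup_(j in L) (T j :\: tt j)).
  set X0 := inl @: R :|: inr @: (~: Cc).
  have hrX0 : rk G X0 = (#|~: Cc| + \sum_i s i)%N by rewrite rk_key setCK hrank.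
  have hcX0 : (#|X0| <= \sum_i s i + #|~: Cc|)%N.
    rewrite card_mk leq_add2r; apply: leq_trans (card_bigcup_le _ _) _.
    by rewrite leq_eqVlt; apply/orP; left; apply/eqP; apply: eq_bigr => i _; rewrite (hss i).2.
  have hYX : Y \subset X0.
    apply: setUSS; apply: imsetS.
      by apply/bigcupsP => i _; apply: (bigcup_sup i).
    rewrite hD0; apply/bigcupsP => j _; exact: (bigcup_sup j).
  have hrY : (#|Y| <= rk G Y)%N.
    have e : Y :|: (X0 :\: Y) = X0.
      apply/setP => z; rewrite in_setU in_setD; case hz: (z \in Y) => //=.
      by rewrite (subsetP hYX _ hz).
    have := rk_sub G Y (X0 :\: Y); rewrite e.
    have := rk_card G (X0 :\: Y); rewrite cardsDS // => h1 h2.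
    have h3 := subset_leq_card hYX.
    move: h1 h2 h3 hcX0; rewrite hrX0.
    move: (rk G Y) (rk G (X0 :\: Y)) (rk G (Y :&: (X0 :\: Y))) #|Y| #|X0| => a b c d e'.
    move=> /ssrnat.leP h1 /ssrnat.leP h2 /ssrnat.leP h3 /ssrnat.leP h4; apply/ssrnat.leP; move: h1 h2 h3 h4.
    rewrite -!plusE -!minusE; lia.
  have hcY : #|Y| = (\sum_(i in I) s i + \sum_(j in L) (#|T j| - t j))%N.
    rewrite card_mk (card_bigcup_eq hssd) (card_bigcup_eq hTtd).
    congr (_ + _)%N; apply: eq_bigr => j _; first by rewrite (hss j).2.
    by rewrite cardsDS ?(htt j).2 ?(htt j).1.
  set Z := inl @: (\bigcup_(i in I) S i) :|: inr @: (\bigcup_(j in L) T j).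
  have hYZ : Y \subset Z.
    apply: setUSS; apply: imsetS; apply/bigcupsP => i hi.
      exact: subset_trans (hss i).1 (bigcup_sup i hi).
    exact: subset_trans (subsetDl _ _) (bigcup_sup i hi).
  have hrZ : rk G Z = (#|\bigcup_(j in L) T j| +
      \rank (submatrix G (\bigcup_(i in I) S i) (\bigcup_(k in K) T k)))%N.
    by rewrite rk_key (compl_bigcup hTdisj hTcov) setCK.
  have hcT := card_bigcup_le (fun j => j \in L) T.
  have hZ := rk_mono G hYZ.
  move: hZ; rewrite hrZ => hZ.
  rewrite (hsplit K) lerBlDl -!PoszD lez_nat.
  have := hsplitT L.
  move: hrY hcY hZ hcT.
  move: (rk G Y) #|Y| (#|\bigcup_(j in L) T j|)
    (\rank (submatrix G (\bigcup_(i in I) S i) (\bigcup_(k in K) T k)))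
    (\sum_(i in I) s i) (\sum_(k in K) t k) (\sum_(j in L) t j)
    (\sum_(j in L) (#|T j| - t j)) (\sum_(j in L) #|T j|) => a b c d e f g h k.
  move=> /ssrnat.leP h1 h2 /ssrnat.leP h3 /ssrnat.leP h4 h5; apply/ssrnat.leP; move: h1 h2 h3 h4 h5.
  rewrite -!plusE; lia.
- move=> hcond.
  pose Idx := ({i : 'I_m & 'I_(s i)} + {j : 'I_n & 'I_(#|T j| - t j)})%type.
  pose A := fun x : Idx => match x with
    | inl y => inl @: S (tag y) | inr y => inr @: T (tag y) end
    : {set 'I_p + 'I_q}.
  have hR : forall J : {set Idx}, (#|J| <= rk G (\bigcup_(x in J) A x))%N.
    move=> J; set JL := [set y | inl y \in J]; set JR := [set y | inr y \in J].
    set I := [set tag y | y in JL]; set L := [set tag y | y in JR].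
    have h1 : (#|J| <= #|JL| + #|JR|)%N.
      rewrite -card_mk; apply: subset_leq_card; apply/subsetP => z hz.
      case: z hz => y hy; rewrite inE; apply/orP; [left|right];
        by apply: imset_f; rewrite inE.
    have h2 : (#|JL| <= \sum_(i in I) s i)%N.
      rewrite -card_sig; apply: subset_leq_card; apply/subsetP => y hy.
      by rewrite inE; apply: imset_f.
    have h3 : (#|JR| <= \sum_(j in L) (#|T j| - t j))%N.
      rewrite -(card_sig (fun j => #|T j| - t j)); apply: subset_leq_card.
      apply/subsetP => y hy; by rewrite inE; apply: imset_f.
    have h4 : inl @: (\bigcup_(i in I) S i) :|: inr @: (\bigcup_(j in L) T j)
        \subset \bigcup_(x in J) A x.
      apply/subsetP => z; rewrite inE => /orP [] /imsetP [c /bigcupP [i hi hc] ->].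
        case/imsetP: hi => y; rewrite inE => hy ei.
        by apply/bigcupP; exists (inl y) => //=; rewrite -ei; apply: imset_f.
      case/imsetP: hi => y; rewrite inE => hy ei.
      by apply/bigcupP; exists (inr y) => //=; rewrite -ei; apply: imset_f.
    have h5 := hcond I (~: L).
    move: h5; rewrite (hsplit (~: L)) setCK lerBlDl -!PoszD lez_nat -(compl_bigcup hTdisj hTcov) => h5.
    have h6 := rk_mono G h4.
    move: h6; rewrite rk_key (card_bigcup_eq hTdisj) => h6.
    have h7 := hsplitT L.
    move: h1 h2 h3 h5 h6 h7.
    move: #|J| #|JL| #|JR| (\sum_(i in I) s i) (\sum_(j in L) (#|T j| - t j))
      (\sum_(k in ~: L) t k) (\sum_(j in L) t j) (\sum_(j in L) #|T j|)
      (\rank (submatrix G (\bigcup_(i in I) S i) (~: (\bigcup_(j in L) T j))))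
      (rk G (\bigcup_(x in J) A x)) => a b c d e f g h k l.
    move=> /ssrnat.leP h1 /ssrnat.leP h2 /ssrnat.leP h3 /ssrnat.leP h5 /ssrnat.leP h6 h7.
    apply/ssrnat.leP; move: h1 h2 h3 h5 h6 h7; rewrite -!plusE; lia.
  have [f [hf hfr]] := rado (rk_mono G) (rk_sub G) (rk_card G) hR.
  have hcardIdx : #|{: Idx}| = (\sum_i s i + \sum_j (#|T j| - t j))%N.
    rewrite card_sum; congr (_ + _)%N.
      have e : [set x : {i : 'I_m & 'I_(s i)} | tag x \in [set: 'I_m]] = [set: _].
        by apply/setP => x; rewrite !inE.
      have := card_sig s [set: 'I_m]; rewrite e cardsT => ->.
      by apply: eq_bigl => i; rewrite inE.
    have e : [set x : {j : 'I_n & 'I_(#|T j| - t j)} | tag x \in [set: 'I_n]] = [set: _].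
      by apply/setP => x; rewrite !inE.
    have := card_sig (fun j => #|T j| - t j) [set: 'I_n]; rewrite e cardsT => ->.
    by apply: eq_bigl => i; rewrite inE.
  have hfinj : injective f.
    have h : #|f @: [set: Idx]| == #|[set: Idx]|.
      rewrite eqn_leq leq_imset_card /= cardsT.
      exact: leq_trans hfr (rk_card G _).
    move/imset_injP: h => h x y e; apply: h; by rewrite ?inE.
  pose Bl i : {set Idx} := [set inl (existT (fun i => 'I_(s i)) i k) | k : 'I_(s i)].
  pose Br j : {set Idx} :=
    [set inr (existT (fun j => 'I_(#|T j| - t j)) j k) | k : 'I_(#|T j| - t j)].
  pose ss i := [set c | inl c \in f @: Bl i].
  pose tt' j := [set c | inr c \in f @: Br j].
  have hBl : forall i, f @: Bl i \subset inl @: S i.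
    move=> i; apply/subsetP => z /imsetP [x /imsetP [k _ ->] ->].
    exact: (hf (inl _)).
  have hBr : forall j, f @: Br j \subset inr @: T j.
    move=> j; apply/subsetP => z /imsetP [x /imsetP [k _ ->] ->].
    exact: (hf (inr _)).
  have hinjl : forall i, injective
      (fun k : 'I_(s i) => (inl (existT (fun i => 'I_(s i)) i k) : Idx)).
    move=> i k1 k2 e.
    have := congr1 (fun x : Idx => if x is inl y then
      tagged_as (existT (fun i => 'I_(s i)) i k1) y else k1) e.
    by rewrite /= !tagged_asE.
  have hinjr : forall j, injective
      (fun k : 'I_(#|T j| - t j) => (inr (existT (fun j => 'I_(#|T j| - t j)) j k) : Idx)).
    move=> j k1 k2 e.
    have := congr1 (fun x : Idx => if x is inr y then
      tagged_as (existT (fun j => 'I_(#|T j| - t j)) j k1) y else k1) e.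
    by rewrite /= !tagged_asE.
  have hcss : forall i, #|ss i| = s i.
    move=> i; rewrite -(@card_imset _ _ inl (ss i) (@inl_inj 'I_p 'I_q)) -(preim_inl (hBl i)).
    by rewrite (card_imset _ hfinj) (card_imset _ (hinjl i)) card_ord.
  have hctt : forall j, #|tt' j| = (#|T j| - t j)%N.
    move=> j; rewrite -(@card_imset _ _ inr (tt' j) (@inr_inj 'I_p 'I_q)) -(preim_inr (hBr j)).
    by rewrite (card_imset _ hfinj) (card_imset _ (hinjr j)) card_ord.
  have hssS : forall i, ss i \subset S i.
    move=> i; apply/subsetP => c; rewrite inE => hc.
    by have := subsetP (hBl i) _ hc; rewrite (mem_imset _ _ (@inl_inj _ _)).
  have httT : forall j, tt' j \subset T j.
    move=> j; apply/subsetP => c; rewrite inE => hc.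
    by have := subsetP (hBr j) _ hc; rewrite (mem_imset _ _ (@inr_inj _ _)).
  exists ss, (fun j => T j :\: tt' j).
  split; first by move=> i; split; [exact: hssS|exact: hcss].
  split.
    move=> j; split; first exact: subsetDl.
    by rewrite cardsDS ?httT // hctt subKn.
  set R := \bigcup_(i < m) ss i; set D := \bigcup_(j < n) tt' j.
  rewrite -(compl_sub hTdisj hTcov httT) -/D.
  have hfX : f @: [set: Idx] \subset inl @: R :|: inr @: D.
    apply/subsetP => z /imsetP [x _ ->]; case: x => [[i k]|[j k]].
      have hz : f (inl (existT _ i k)) \in f @: Bl i by apply: imset_f; apply: imset_f.
      have /imsetP [c hc ec] := subsetP (hBl i) _ hz.
      rewrite inE; apply/orP; left; rewrite ec; apply: imset_f.
      by apply/bigcupP; exists i => //; rewrite inE -ec.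
    have hz : f (inr (existT _ j k)) \in f @: Br j by apply: imset_f; apply: imset_f.
    have /imsetP [c hc ec] := subsetP (hBr j) _ hz.
    rewrite inE; apply/orP; right; rewrite ec; apply: imset_f.
    by apply/bigcupP; exists j => //; rewrite inE -ec.
  have h1 := leq_trans hfr (rk_mono G hfX).
  rewrite rk_key hcardIdx in h1.
  have h2 : (#|D| <= \sum_j (#|T j| - t j))%N.
    apply: leq_trans (card_bigcup_le _ _) _.
    by rewrite leq_eqVlt; apply/orP; left; apply/eqP; apply: eq_bigr => j _; rewrite hctt.
  have h3 := rank_leq_row (submatrix G R (~: D)).
  have h4 : (#|R| <= \sum_i s i)%N.
    apply: leq_trans (card_bigcup_le _ _) _.
    by rewrite leq_eqVlt; apply/orP; left; apply/eqP; apply: eq_bigr => i _; rewrite hcss.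
  move: h1 h2 h3 h4; move: #|R| #|D| (\sum_i s i) (\sum_j (#|T j| - t j))
    (\rank (submatrix G R (~: D))) => c b d e a.
  move=> /ssrnat.leP h1 /ssrnat.leP h2 /ssrnat.leP h3 /ssrnat.leP h4.
  apply/eqP; rewrite eqn_leq; apply/andP; split; apply/ssrnat.leP;
    move: h1 h2 h3 h4; rewrite -!plusE; lia.
Qed.
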